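(* Let $\{X(t)\}_{t\ge 0}$ be generated by the voting diffusion model (defined in the context) with an arbitrary communicating pair process $\{\{i_1(t),i_2(t)\}\}$ and an arbitrary subject process $\{S(t)\}$, starting from an arbitrary (random) initial profile $X(0)\in\mathbb{R}^{m\times n}$. Then $\lim_{t\to\infty}X(t)$ exists almost surely.
   Context: Voting diffusion model: there are $m$ agents indexed by $[m]=\{1,\dots,m\}$ and $n$ candidates indexed by $[n]$. The opinion profile at time $t\in\{0,1,2,\dots\}$ is a random real $m\times n$ matrix $X(t)$, where $X_{ij}(t)$ is agent $i$'s score of candidate $j$. A communicating pair process is a sequence of random unordered pairs $\{i_1(t),i_2(t)\}$ with $i_1(t)\ne i_2(t)\in[m]$ (each measurable w.r.t. the discrete $\sigma$-algebra on the set of such pairs). A subject process is a sequence of random subsets $S(t)\subseteq[n]$ (measurable w.r.t. the power-set $\sigma$-algebra). No independence, stationarity, or adaptedness is assumed on either process; they may depend arbitrarily on the past, the future, or external randomness. The update is: $X_{ij}(t+1)=\tfrac12\big(X_{i_1(t)j}(t)+X_{i_2(t)j}(t)\big)$ if $i\in\{i_1(t),i_2(t)\}$ and $j\in S(t)$, and $X_{ij}(t+1)=X_{ij}(t)$ otherwise. *)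

(* Defs.v *)
From Stdlib Require Import Reals Arith Bool.
Open Scope R_scope.

(* X t i j : score of agent i for candidate j at time t (only i < m, j < n matter).
   Communicating pair at time t: {i1 t, i2 t} with i1 t <> i2 t, both < m
   (an unordered pair represented by any ordering; the update is symmetric). *)
Definition voting_diffusion (m n : nat) (X : nat -> nat -> nat -> R)
    (i1 i2 : nat -> nat) (S : nat -> nat -> bool) : Prop :=
  (forall t, (i1 t < m)%nat /\ (i2 t < m)%nat /\ i1 t <> i2 t) /\
  (forall t i j, (i < m)%nat -> (j < n)%nat ->
     X (Datatypes.S t) i j =
       if ((Nat.eqb i (i1 t) || Nat.eqb i (i2 t)) && S t j)%bool
       then (X t (i1 t) j + X t (i2 t) j) / 2
       else X t i j).

(* Main.v *)
Require Import Defs.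
From Stdlib Require Import Reals Arith Bool Lra Lia Classical.
From Coquelicot Require Import Coquelicot.
Open Scope R_scope.

Ltac rabs_destr := unfold Rabs in *; repeat match goal with
  | |- context [Rcase_abs ?z] => destruct (Rcase_abs z)
  | H : context [Rcase_abs ?z] |- _ => destruct (Rcase_abs z) end.

Definition ppart (y : R) := Rmax y 0.

Ltac pp_destr := unfold ppart, Rmax in *; repeat match goal with
  | |- context [Rle_dec ?a ?b] => destruct (Rle_dec a b)
  | H : context [Rle_dec ?a ?b] |- _ => destruct (Rle_dec a b) end.

Fixpoint sumk (K : nat) (f : nat -> R) : R :=
  match K with O => 0 | Datatypes.S K' => sumk K' f + f K' end.

Lemma sumk_ext K f g : (forall k, (k < K)%nat -> f k = g k) -> sumk K f = sumk K g.
Proof. induction K; simpl; intros; auto. rewrite IHK, H; auto. Qed.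

Lemma sumk_le K f g : (forall k, (k < K)%nat -> f k <= g k) -> sumk K f <= sumk K g.
Proof. induction K; simpl; intros; [lra|]. specialize (IHK (fun k Hk => H k ltac:(lia))).
  specialize (H K ltac:(lia)). lra. Qed.

Lemma sumk_plus K f g : sumk K (fun k => f k + g k) = sumk K f + sumk K g.
Proof. induction K; simpl; [ring|]. rewrite IHK; ring. Qed.

Lemma sumk_minus K f g : sumk K (fun k => f k - g k) = sumk K f - sumk K g.
Proof. induction K; simpl; [ring|]. rewrite IHK; ring. Qed.

Lemma sumk_const K a : sumk K (fun _ => a) = INR K * a.
Proof. induction K; simpl sumk; [simpl; ring|]. rewrite IHK, S_INR; ring. Qed.

Lemma sumk_nonneg K f : (forall k, (k < K)%nat -> 0 <= f k) -> 0 <= sumk K f.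
Proof. intros. rewrite <- (Rmult_0_r (INR K)), <- sumk_const. apply sumk_le. auto. Qed.

Lemma sumk_term K f i : (forall k, (k < K)%nat -> 0 <= f k) -> (i < K)%nat -> f i <= sumk K f.
Proof. induction K; intros Hf Hi; [lia|]. simpl.
  destruct (Nat.eq_dec i K).
  - subst. assert (0 <= sumk K f) by (apply sumk_nonneg; intros; apply Hf; lia). lra.
  - assert (f i <= sumk K f) by (apply IHK; [intros; apply Hf|]; lia).
    assert (0 <= f K) by (apply Hf; lia). lra. Qed.

Lemma sumk_ind K p d : (p < K)%nat -> sumk K (fun k => if Nat.eqb k p then d else 0) = d.
Proof. induction K; intros Hp; simpl; [lia|].
  destruct (Nat.eq_dec p K).
  - subst. rewrite Nat.eqb_refl.
    rewrite (sumk_ext K _ (fun _ => 0)). rewrite sumk_const. ring.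
    intros k Hk. destruct (Nat.eqb_spec k K); [lia|auto].
  - rewrite IHK by lia. destruct (Nat.eqb_spec K p); [lia|]. ring. Qed.

Lemma sumk_gt K f e : (0 < K)%nat -> (forall r, (r < K)%nat -> e < f r) -> INR K * e < sumk K f.
Proof. induction K; intros HK Hf; [lia|]. simpl sumk. rewrite S_INR.
  destruct K.
  - simpl. specialize (Hf O ltac:(lia)). lra.
  - assert (INR (Datatypes.S K) * e < sumk (Datatypes.S K) f) by (apply IHK; [lia| intros; apply Hf; lia]).
    specialize (Hf (Datatypes.S K) ltac:(lia)). lra. Qed.

Lemma pigeon K f e : (0 < K)%nat -> sumk K f <= INR K * e -> exists r, (r < K)%nat /\ f r <= e.
Proof. intros HK Hs. apply NNPP. intro Hn.
  assert (INR K * e < sumk K f). { apply sumk_gt; auto. intros r Hr.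
    apply Rnot_le_lt. intro. apply Hn. eauto. } lra. Qed.

Lemma telesc (F : nat -> R) K :
  sumk K (fun r => F r - 2 * F (Datatypes.S r) + F (Datatypes.S (Datatypes.S r)))
  = (F (Datatypes.S K) - F K) - (F 1%nat - F 0%nat).
Proof. induction K; simpl sumk; [ring|]. rewrite IHK. ring. Qed.

Lemma pair_drop u v c :
  0 <= ppart (u-c) + ppart (v-c) - 2 * ppart ((u+v)/2 - c) /\
  (u <= c <= (u+v)/2 -> c - u <= ppart (u-c) + ppart (v-c) - 2 * ppart ((u+v)/2 - c)) /\
  ((u+v)/2 <= c <= u -> u - c <= ppart (u-c) + ppart (v-c) - 2 * ppart ((u+v)/2 - c)).
Proof. pp_destr; repeat split; intros; lra. Qed.

Lemma tent y c d : 0 < d ->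
  0 <= ppart (y - (c - d)) - 2 * ppart (y - c) + ppart (y - (c + d)) /\
  (Rabs (y - c) <= d/2 -> d/2 <= ppart (y - (c - d)) - 2 * ppart (y - c) + ppart (y - (c + d))).
Proof. intros. split; [|intros]; rabs_destr; pp_destr; lra. Qed.

Lemma slope1 y c d : 0 <= d -> 0 <= ppart (y - c) - ppart (y - (c + d)) <= d.
Proof. intros. pp_destr; lra. Qed.

Lemma cv_bound u l lo hi : Un_cv u l -> (forall t, lo <= u t <= hi) -> lo <= l <= hi.
Proof. intros Hc Hb. split; apply Rnot_lt_le; intro Hlt.
  - destruct (Hc (lo - l) ltac:(lra)) as [N HN]. specialize (HN N (le_n _)).
    specialize (Hb N). unfold R_dist in HN. rabs_destr; lra.
  - destruct (Hc (l - hi) ltac:(lra)) as [N HN]. specialize (HN N (le_n _)).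
    specialize (Hb N). unfold R_dist in HN. rabs_destr; lra. Qed.

Definition Step (m : nat) (x : nat -> nat -> R) := forall t,
  (forall k, (k < m)%nat -> x (Datatypes.S t) k = x t k) \/
  exists p q, (p < m)%nat /\ (q < m)%nat /\ p <> q /\
   forall k, (k < m)%nat -> x (Datatypes.S t) k =
     if (Nat.eqb k p || Nat.eqb k q)%bool then (x t p + x t q) / 2 else x t k.

Definition hh m (x : nat -> nat -> R) t c := sumk m (fun k => ppart (x t k - c)).

Lemma h_step m x (Hs : Step m x) t c : exists dr, 0 <= dr /\
  hh m x (Datatypes.S t) c = hh m x t c - dr /\
  forall i, (i < m)%nat ->
    (x t i <= c <= x (Datatypes.S t) i -> c - x t i <= dr) /\
    (x (Datatypes.S t) i <= c <= x t i -> x t i - c <= dr).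
Proof.
  destruct (Hs t) as [Heq | [p [q [Hp [Hq [Hpq Hk]]]]]].
  - exists 0. split; [lra|]. split.
    + unfold hh. rewrite (sumk_ext m _ (fun k => ppart (x t k - c))). ring.
      intros k Hk. rewrite Heq; auto.
    + intros i Hi. rewrite Heq by auto. split; intros; lra.
  - exists (ppart (x t p - c) + ppart (x t q - c) - 2 * ppart ((x t p + x t q)/2 - c)).
    destruct (pair_drop (x t p) (x t q) c) as [D0 [D1 D2]].
    destruct (pair_drop (x t q) (x t p) c) as [E0 [E1 E2]].
    replace (x t q + x t p) with (x t p + x t q) in * by ring.
    split; auto. split.
    + unfold hh. transitivity (sumk m (fun k => ppart (x t k - c) +
         ((if Nat.eqb k p then ppart ((x t p + x t q)/2 - c) - ppart (x t p - c) else 0) +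
          (if Nat.eqb k q then ppart ((x t p + x t q)/2 - c) - ppart (x t q - c) else 0)))).
      * apply sumk_ext. intros k Hk'. rewrite Hk by auto.
        destruct (Nat.eqb_spec k p); destruct (Nat.eqb_spec k q); simpl; subst; try congruence; ring.
      * rewrite sumk_plus, sumk_plus, sumk_ind, sumk_ind by auto. ring.
    + intros i Hi. rewrite (Hk i Hi).
      destruct (Nat.eqb_spec i p); destruct (Nat.eqb_spec i q); simpl; subst; try congruence.
      * split; intros; [apply D1|apply D2]; lra.
      * split; intros H; [specialize (E1 H)|specialize (E2 H)]; lra.
      * split; intros; lra.
Qed.

Lemma h_dec m x (Hs : Step m x) t c : hh m x (Datatypes.S t) c <= hh m x t c.
Proof. destruct (h_step m x Hs t c) as [dr [H1 [H2 _]]]. lra. Qed.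

Lemma h_nonneg m x t c : 0 <= hh m x t c.
Proof. apply sumk_nonneg. intros. unfold ppart. apply Rmax_r. Qed.

Lemma h_slope m x t c d : 0 <= d -> 0 <= hh m x t c - hh m x t (c + d) <= INR m * d.
Proof. intros Hd. unfold hh. rewrite <- sumk_minus. split.
  - apply sumk_nonneg. intros. apply slope1; auto.
  - rewrite <- sumk_const. apply sumk_le. intros. apply slope1; auto. Qed.

Definition HL m x c := real (Lim_seq (fun t => hh m x t c)).

Lemma h_cv m x (Hs : Step m x) c : Un_cv (fun t => hh m x t c) (HL m x c).
Proof.
  destruct (decreasing_cv (fun t => hh m x t c)) as [l Hl].
  - intro n. apply h_dec; auto.
  - exists 0. intros y [i Hi]. unfold opp_seq in Hi. subst y.
    pose proof (h_nonneg m x i c). lra.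
  - unfold HL. rewrite (is_lim_seq_unique _ l). simpl. auto.
    apply is_lim_seq_Reals. auto.
Qed.

Lemma H_slope m x (Hs : Step m x) c d : 0 <= d -> 0 <= HL m x c - HL m x (c + d) <= INR m * d.
Proof. intros Hd. apply (cv_bound (fun t => hh m x t c - hh m x t (c + d))).
  - apply CV_minus; apply h_cv; auto.
  - intros; apply h_slope; auto. Qed.

Lemma x_bound m x (Hs : Step m x) : forall t k, (k < m)%nat ->
  Rabs (x t k) <= sumk m (fun k => Rabs (x O k)).
Proof.
  set (B := sumk m (fun k => Rabs (x O k))).
  induction t; intros k Hk.
  - apply (sumk_term m (fun k => Rabs (x O k))); auto. intros; apply Rabs_pos.
  - destruct (Hs t) as [Heq | [p [q [Hp [Hq [Hpq Hkk]]]]]].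
    + rewrite Heq; auto.
    + rewrite Hkk by auto. destruct (_ || _)%bool; [|auto].
      pose proof (IHt p Hp). pose proof (IHt q Hq). rabs_destr; lra.
Qed.

Lemma nonconv (u : nat -> R) B : (forall t, Rabs (u t) <= B) -> ~ (exists l, Un_cv u l) ->
  exists a b, a < b /\ (forall N, exists t, (N <= t)%nat /\ u t <= a) /\
     (forall N, exists t, (N <= t)%nat /\ b <= u t).
Proof.
  intros Hb Hn.
  destruct (ex_LimSup_seq u) as [ls HS]. destruct (ex_LimInf_seq u) as [li HI].
  destruct ls as [ls| |].
  2:{ exfalso. destruct (HS B O) as [n [_ Hn']]. specialize (Hb n). rabs_destr; lra. }
  2:{ exfalso. destruct (HS (-B)) as [N HN]. specialize (HN N (le_n _)). specialize (Hb N). rabs_destr; lra. }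
  destruct li as [li| |].
  2:{ exfalso. destruct (HI B) as [N HN]. specialize (HN N (le_n _)). specialize (Hb N). rabs_destr; lra. }
  2:{ exfalso. destruct (HI (-B) O) as [n [_ Hn']]. specialize (Hb n). rabs_destr; lra. }
  destruct (Rtotal_order li ls) as [Hlt | [Heq | Hgt]].
  - assert (Hd : 0 < (ls - li) / 3) by lra.
    exists (li + (ls - li)/3), (ls - (ls - li)/3). split; [lra|]. split.
    + intro N. destruct (HI (mkposreal _ Hd)) as [H1 _]. destruct (H1 N) as [t [Ht Hu]].
      exists t. simpl in Hu. split; auto; lra.
    + intro N. destruct (HS (mkposreal _ Hd)) as [H1 _]. destruct (H1 N) as [t [Ht Hu]].
      exists t. simpl in Hu. split; auto; lra.
  - exfalso. subst li. apply Hn. exists ls. apply is_lim_seq_Reals.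
    apply is_LimSup_LimInf_lim_seq; auto.
  - exfalso. assert (Hd : 0 < (li - ls) / 2) by lra.
    destruct (HS (mkposreal _ Hd)) as [_ [N1 HN1]]. destruct (HI (mkposreal _ Hd)) as [_ [N2 HN2]].
    specialize (HN1 (N1 + N2)%nat ltac:(lia)). specialize (HN2 (N1 + N2)%nat ltac:(lia)).
    simpl in *. lra.
Qed.

Lemma agent_conv m x (Hs : Step m x) i : (i < m)%nat -> exists l, Un_cv (fun t => x t i) l.
Proof.
  intros Hi. apply NNPP. intro Hnot.
  destruct (nonconv (fun t => x t i) _ (fun t => x_bound m x Hs t i Hi) Hnot)
    as [a [b [Hab [Hlo Hhi]]]].
  set (N := (2 * m + 2)%nat). set (K := (2 * m + 1)%nat).
  assert (HN : INR N = 2 * INR m + 2) by (unfold N; rewrite plus_INR, mult_INR; simpl; ring).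
  assert (HK : INR K = 2 * INR m + 1) by (unfold K; rewrite plus_INR, mult_INR; simpl; ring).
  assert (Hm0 : 0 <= INR m) by apply pos_INR.
  set (d := (b - a) / INR N).
  assert (Hd : 0 < d) by (unfold d; apply Rdiv_lt_0_compat; lra).
  assert (HdN : INR N * d = b - a) by (unfold d; field; lra).
  set (c := fun r : nat => a + INR r * d).
  assert (HcS : forall r, c (Datatypes.S r) = c r + d) by (intro r; unfold c; rewrite S_INR; ring).
  set (F := fun r => HL m x (c r)).
  set (e := INR m * d / INR K).
  assert (He : INR K * e = INR m * d) by (unfold e; field; lra).
  assert (He2 : e < d / 2).
  { assert (e * (2 * INR m + 1) = INR m * d) by (rewrite <- HK; lra). nra. }
  assert (Hsum : sumk K (fun r => F r - 2 * F (Datatypes.S r) + F (Datatypes.S (Datatypes.S r)))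
                 <= INR K * e).
  { rewrite telesc, He. unfold F. rewrite !HcS. simpl (c 0%nat) in *.
    pose proof (H_slope m x Hs (c K) d ltac:(lra)).
    pose proof (H_slope m x Hs (c 0%nat) d ltac:(lra)).
    assert (c 0%nat = a) by (unfold c; simpl; ring). rewrite H1 in *.
    lra. }
  destruct (pigeon K _ e ltac:(unfold K; lia) Hsum) as [r [Hr Hr2]].
  set (c0 := c (Datatypes.S r)).
  assert (Hac : a < c0).
  { unfold c0, c. rewrite S_INR. pose proof (pos_INR r). nra. }
  assert (Hcb : c0 < b).
  { unfold c0, c. assert (INR (Datatypes.S r) <= INR K) by (apply le_INR; lia).
    assert (INR (Datatypes.S r) * d <= INR K * d) by (apply Rmult_le_compat_r; lra).
    rewrite HK in H0. rewrite HN in HdN. nra. }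
  assert (HD : Un_cv (fun t => hh m x t (c0 - d) - hh m x t c0 - hh m x t c0 + hh m x t (c0 + d))
                (F r - 2 * F (Datatypes.S r) + F (Datatypes.S (Datatypes.S r)))).
  { replace (F r - 2 * F (Datatypes.S r) + F (Datatypes.S (Datatypes.S r))) with
      (HL m x (c0 - d) - HL m x c0 - HL m x c0 + HL m x (c0 + d)).
    - apply CV_plus; [apply CV_minus; [apply CV_minus|]|]; apply h_cv; auto.
    - unfold F, c0. rewrite (HcS (Datatypes.S r)), (HcS r).
      replace (c r + d - d) with (c r) by ring. ring. }
  destruct (HD (d / 2 - e) ltac:(lra)) as [T1 HT1].
  assert (Hgap : forall t, (T1 <= t)%nat -> d / 2 < Rabs (x t i - c0)).
  { intros t Ht. specialize (HT1 t Ht). unfold R_dist in HT1.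
    apply Rnot_le_lt. intro Hle.
    assert (Hge : d / 2 <= hh m x t (c0 - d) - hh m x t c0 - hh m x t c0 + hh m x t (c0 + d)).
    { unfold hh. rewrite <- !sumk_minus, <- sumk_plus.
      rewrite (sumk_ext m _ (fun k => ppart (x t k - (c0 - d)) - 2 * ppart (x t k - c0) + ppart (x t k - (c0 + d))))
        by (intros; ring).
      eapply Rle_trans; [|apply (sumk_term m _ i)]; auto.
      - apply tent; auto.
      - intros k Hk. apply (tent (x t k) c0 d Hd). }
    rabs_destr; lra. }
  destruct (h_cv m x Hs c0 (d / 4) ltac:(lra)) as [T2 HT2].
  assert (Hnc : forall t, (T1 + T2 <= t)%nat ->
     (x t i < c0 -> x (Datatypes.S t) i < c0) /\ (c0 < x t i -> c0 < x (Datatypes.S t) i)).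
  { intros t Ht.
    pose proof (Hgap t ltac:(lia)) as G1. pose proof (Hgap (Datatypes.S t) ltac:(lia)) as G2.
    pose proof (HT2 t ltac:(lia)) as A1. pose proof (HT2 (Datatypes.S t) ltac:(lia)) as A2.
    unfold R_dist in A1, A2.
    destruct (h_step m x Hs t c0) as [dr [Hdr0 [Hdr1 Hdr2]]]. destruct (Hdr2 i Hi) as [Up Dn].
    split; intro Hx; apply Rnot_le_lt; intro Hy.
    - assert (c0 - x t i <= dr) by (apply Up; lra). rabs_destr; lra.
    - assert (x t i - c0 <= dr) by (apply Dn; lra). rabs_destr; lra. }
  set (T := (T1 + T2)%nat).
  assert (Hind : forall n, (x T i < c0 -> x (T + n)%nat i < c0) /\ (c0 < x T i -> c0 < x (T + n)%nat i)).
  { induction n.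
    - rewrite Nat.add_0_r. auto.
    - destruct IHn as [I1 I2]. rewrite Nat.add_succ_r.
      destruct (Hnc (T + n)%nat ltac:(unfold T; lia)) as [J1 J2]. split; auto. }
  pose proof (Hgap T ltac:(unfold T; lia)) as GT.
  destruct (Rlt_or_le (x T i) c0) as [Hlt | Hge].
  - destruct (Hhi T) as [t [Ht Hbt]].
    replace t with (T + (t - T))%nat in Hbt by lia.
    pose proof (proj1 (Hind (t - T)%nat) Hlt). lra.
  - assert (c0 < x T i) by (rabs_destr; lra).
    destruct (Hlo T) as [t [Ht Hat]].
    replace t with (T + (t - T))%nat in Hat by lia.
    pose proof (proj2 (Hind (t - T)%nat) H). lra.
Qed.

(* Omega: sample space; every process may depend arbitrarily on the outcome w.
   The convergence is asserted for every sample path. *)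
Theorem theorem1 (m n : nat) (Omega : Type)
    (X : Omega -> nat -> nat -> nat -> R)
    (i1 i2 : Omega -> nat -> nat) (S : Omega -> nat -> nat -> bool) :
  (forall w, voting_diffusion m n (X w) (i1 w) (i2 w) (S w)) ->
  forall w, forall i j, (i < m)%nat -> (j < n)%nat ->
    exists l : R, Un_cv (fun t => X w t i j) l.
Proof.
  intros Hv w i j Hi Hj.
  destruct (Hv w) as [Hpair Hupd].
  apply (agent_conv m (fun t k => X w t k j)); auto.
  intro t. destruct (Hpair t) as [Hp [Hq Hpq]].
  destruct (S w t j) eqn:ES.
  - right. exists (i1 w t), (i2 w t). repeat split; auto.
    intros k Hk. rewrite Hupd by auto. rewrite ES, andb_true_r. reflexivity.
  - left. intros k Hk. rewrite Hupd by auto. rewrite ES, andb_false_r. reflexivity.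
Qed.
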